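(* Let $w_1,w_2,w_3\in(-\infty,1)\setminus\{0\}$, $n_j=\tfrac12(1-\sqrt{1-w_j})$, and for $\lambda\in\mathbb{S}^1$ let $\nu(\lambda)=(\nu_{w_1}(\lambda),\nu_{w_2}(\lambda),\nu_{w_3}(\lambda))$ with $\nu_w(\lambda)=\frac12-\frac12\sqrt{1+\frac{w(\lambda-1)^2}{4\lambda}}$ (nonnegative square root). Then $\nu(\lambda)\in T$ for all $\lambda\in\mathbb{S}^1$ if and only if \[ |n_1|+|n_2|+|n_3|\le 1,\quad |n_i|\le|n_j|+|n_k|,\quad |w_i|\le|w_j|+|w_k|\quad\text{for all }\{i,j,k\}=\{1,2,3\}. \]
   Context: $T_0\subset\mathbb{R}^3$ is the closed tetrahedron $\{(\nu_1,\nu_2,\nu_3):\nu_1+\nu_2+\nu_3\le1,\ \nu_i\le\nu_j+\nu_k\ \forall\{i,j,k\}=\{1,2,3\}\}$, and $T$ is the orbit of $T_0$ under the group of transformations of $\mathbb{R}^3$ generated by the maps $\nu_k\mapsto\nu_k+1$ and $\nu_k\mapsto-\nu_k$ ($k=1,2,3$, acting on one coordinate at a time). For $\lambda=e^{i\theta}$, $\frac{(\lambda-1)^2}{4\lambda}=-\sin^2(\theta/2)$. *)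

(* Defs.v *)
From Stdlib Require Import Reals ZArith.
From Coquelicot Require Import Coquelicot.

Open Scope R_scope.

(* On the unit circle the radicand is real (it equals 1 - w sin^2(theta/2)),
   so we take its real part and the (nonnegative) real square root. *)
Definition nu_w (w : R) (l : C) : R :=
  1/2 - 1/2 * sqrt (Re (RtoC 1 + (RtoC w * ((l - RtoC 1) * (l - RtoC 1)) / (RtoC 4 * l)))%C).

Definition InT0 (x y z : R) : Prop :=
  x + y + z <= 1 /\ x <= y + z /\ y <= x + z /\ z <= x + y.

Definition is_sign (e : R) : Prop := e = 1 \/ e = -1.

(* T = orbit of T_0 under the group generated by nu_k -> nu_k + 1 and
   nu_k -> - nu_k; its elements are exactly the maps
   nu_k -> e_k nu_k + m_k with e_k = +-1, m_k in Z (coordinatewise). *)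
Definition InT (x y z : R) : Prop :=
  exists (e1 e2 e3 : R) (m1 m2 m3 : Z),
    is_sign e1 /\ is_sign e2 /\ is_sign e3 /\
    InT0 (e1 * x + IZR m1) (e2 * y + IZR m2) (e3 * z + IZR m3).

Definition n_w (w : R) : R := 1/2 * (1 - sqrt (1 - w)).

(* Main.v *)
Require Import Defs.
From Stdlib Require Import Reals ZArith Lra Psatz.
From Coquelicot Require Import Coquelicot.
Open Scope R_scope.

Definition f (w s : R) : R := 1/2 - 1/2 * sqrt (1 - w*s).
Definition G (t : R) : R := Rabs (1/2 - 1/2 * sqrt (1 - t)).
Definition g (w s : R) : R := Rabs (f w s).
Definition kk (t : R) : R := / (2 * (1 + sqrt (1 - t))).

Lemma sqrt_le_one x : x <= 1 -> sqrt x <= 1.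
Proof. intros H. pose proof (sqrt_le_1_alt x 1 H) as H1. rewrite sqrt_1 in H1. exact H1. Qed.
Lemma one_le_sqrt x : 1 <= x -> 1 <= sqrt x.
Proof. intros H. pose proof (sqrt_le_1_alt 1 x H) as H1. rewrite sqrt_1 in H1. exact H1. Qed.

Lemma g_G w s : g w s = G (w*s).
Proof. reflexivity. Qed.

Lemma kk_pos t : 0 < kk t.
Proof. unfold kk. apply Rinv_0_lt_compat. pose proof (sqrt_pos (1-t)). lra. Qed.

Lemma kk_le_half t : kk t <= 1/2.
Proof. unfold kk. pose proof (sqrt_pos (1-t)).
  replace (1/2) with (/2) by field. apply Rinv_le_contravar; lra. Qed.

Lemma kk_mono t t' : t <= t' -> t' <= 1 -> kk t <= kk t'.
Proof. intros. unfold kk. pose proof (sqrt_pos (1-t')).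
  assert (sqrt (1-t') <= sqrt (1-t)) by (apply sqrt_le_1_alt; lra).
  apply Rinv_le_contravar; lra. Qed.

Lemma kk_smono t t' : t < t' -> t' <= 1 -> kk t < kk t'.
Proof. intros. unfold kk. pose proof (sqrt_pos (1-t')).
  assert (sqrt (1-t') < sqrt (1-t)) by (apply sqrt_lt_1_alt; lra).
  apply Rinv_lt_contravar; nra. Qed.

Lemma f_kk w s : w*s <= 1 -> f w s = w*s*kk (w*s).
Proof. intros H. unfold f, kk.
  pose proof (sqrt_pos (1-w*s)) as Hq.
  pose proof (sqrt_sqrt (1-w*s) ltac:(lra)) as Hq2.
  set (q := sqrt (1-w*s)) in *.
  replace (w*s) with (1 - q*q) by lra.
  field. lra. Qed.

Lemma g_kk w s : w*s <= 1 -> 0 <= s -> g w s = s * Rabs w * kk (w*s).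
Proof. intros H Hs. unfold g. rewrite f_kk by lra.
  rewrite !Rabs_mult. rewrite (Rabs_pos_eq (kk _)) by (left; apply kk_pos).
  rewrite (Rabs_pos_eq s) by lra. ring. Qed.

Lemma kk_small t : t <= 1 -> 1/4 - Rabs t/4 <= kk t <= 1/4 + Rabs t/4.
Proof. intros H. 
  pose proof (sqrt_pos (1-t)) as Hq.
  pose proof (sqrt_sqrt (1-t) ltac:(lra)) as Hq2.
  assert (E : kk t = 1/4 + t * (/ ((1 + sqrt (1-t))*(1+sqrt(1-t)))) / 4).
  { unfold kk. set (q := sqrt (1-t)) in *. replace t with (1 - q*q) by lra.
    field. lra. }
  rewrite E. set (q := sqrt (1-t)) in *.
  assert (0 < / ((1+q)*(1+q)) <= 1).
  { split. apply Rinv_0_lt_compat; nra. rewrite <- Rinv_1.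
    apply Rinv_le_contravar; nra. }
  set (v := / ((1+q)*(1+q))) in *.
  unfold Rabs; destruct (Rcase_abs t); split; nra. Qed.

Lemma G_mono_pos t t' : 0 <= t <= t' -> t' <= 1 -> G t <= G t'.
Proof. intros. unfold G.
  assert (sqrt (1-t') <= sqrt (1-t)) by (apply sqrt_le_1_alt; lra).
  assert (sqrt (1-t) <= 1) by (apply sqrt_le_one; lra).
  pose proof (sqrt_pos (1-t')).
  rewrite !Rabs_pos_eq; lra. Qed.

Lemma G_mono_neg t t' : t' <= t <= 0 -> G t <= G t'.
Proof. intros. unfold G.
  assert (sqrt (1-t) <= sqrt (1-t')) by (apply sqrt_le_1_alt; lra).
  assert (1 <= sqrt (1-t)) by (apply one_le_sqrt; lra).
  rewrite !Rabs_left1; lra. Qed.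

Lemma G_le_half t : -3 <= t <= 1 -> G t <= 1/2.
Proof. intros. unfold G.
  assert (sqrt (1-t) <= 2).
  { replace 2 with (sqrt (2*2)) by (apply sqrt_square; lra). apply sqrt_le_1_alt; lra. }
  pose proof (sqrt_pos (1-t)).
  unfold Rabs; destruct Rcase_abs; lra. Qed.

Lemma ratio w w' s : w' <= w -> w < 1 -> 0 <= s <= 1 ->
  kk (w*s) * kk w' <= kk (w'*s) * kk w.
Proof. intros Hw Hw1 Hs. unfold kk.
  assert (w*s <= 1) by nra. assert (w'*s <= 1) by nra.
  pose proof (sqrt_pos (1-w)) as Hu. pose proof (sqrt_pos (1-w')) as Hu'.
  pose proof (sqrt_pos (1-w*s)) as HP. pose proof (sqrt_pos (1-w'*s)) as HP'.
  pose proof (sqrt_pos s) as Hr.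
  pose proof (sqrt_sqrt (1-w) ltac:(lra)) as Hu2.
  pose proof (sqrt_sqrt (1-w') ltac:(lra)) as Hu2'.
  pose proof (sqrt_sqrt (1-w*s) ltac:(lra)) as HP2.
  pose proof (sqrt_sqrt (1-w'*s) ltac:(lra)) as HP2'.
  pose proof (sqrt_sqrt s ltac:(lra)) as Hr2.
  assert (Hr1 : sqrt s <= 1) by (apply sqrt_le_one; lra).
  assert (Huu : sqrt (1-w) <= sqrt (1-w')) by (apply sqrt_le_1_alt; lra).
  assert (HPP : sqrt (1-w*s) <= sqrt (1-w'*s)) by (apply sqrt_le_1_alt; nra).
  assert (Hu0 : 0 < sqrt (1-w)) by (apply sqrt_lt_R0; lra).
  set (u := sqrt (1-w)) in *. set (u' := sqrt (1-w')) in *.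
  set (P := sqrt (1-w*s)) in *. set (P' := sqrt (1-w'*s)) in *.
  set (r := sqrt s) in *.
  assert (HP3 : P*P = 1 - s + s*(u*u)) by nra.
  assert (HP3' : P'*P' = 1 - s + s*(u'*u')) by nra.
  assert (Hru : r*u <= P).
  { destruct (Rle_or_lt (r*u) P); auto. assert (P*P < (r*u)*(r*u)) by nra. nra. }
  assert (Hru' : r*u' <= P').
  { destruct (Rle_or_lt (r*u') P'); auto. assert (P'*P' < (r*u')*(r*u')) by nra. nra. }
  assert (Hsr : s <= r) by nra.
  assert (K1 : s*(1+u)*(u+u') <= (1+P)*(P+P')).
  { assert (r*(1+r*u) >= s*(1+u)) by nra.
    assert ((1+P)*(P+P') >= (1+r*u)*(r*u+r*u')).
    { apply Rle_ge; apply Rmult_le_compat; nra. }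
    assert ((r*(1+r*u) - s*(1+u))*(u+u') >= 0) by (apply Rle_ge; apply Rmult_le_pos; lra).
    nra. }
  assert (HPpos : 0 < P + P').
  { destruct (Rle_or_lt s (1/2)). assert (P*P >= 1/2) by nra. nra.
    assert (P*P >= s*(u*u)) by nra. nra. }
  assert (K2 : (1+u)*(P'-P)*(P'+P) <= (u'-u)*(1+P)*(P+P')).
  { replace ((1+u)*(P'-P)*(P'+P)) with ((1+u)*s*((u'-u)*(u'+u))) by nra. nra. }
  assert (K3 : (1+u)*(P'-P) <= (u'-u)*(1+P)).
  { apply (Rmult_le_reg_r (P+P')); auto. nra. }
  rewrite <- !Rinv_mult. apply Rinv_le_contravar. nra. nra. Qed.

Lemma re_eq (w x y : R) : x*x+y*y = 1 ->
 Re (RtoC 1 + (RtoC w * (((x,y) - RtoC 1) * ((x,y) - RtoC 1)) / (RtoC 4 * (x,y))))%C = 1 - w*(1-x)/2.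
Proof.
intros H.
unfold Cdiv, Cinv, Cplus, Cmult, Cminus, Copp, Cplus, RtoC, Re, Im; simpl.
replace ((4 * x - 0 * y) * ((4 * x - 0 * y) * 1) + (4 * y + 0 * x) * ((4 * y + 0 * x) * 1)) with 16 by nra.
assert (Hy : y*y = 1 - x*x) by lra.
field_simplify.
replace (y^2) with (1-x*x) by (rewrite <- Hy; ring).
field.
Qed.

Lemma nu_f w (l : C) : Cmod l = 1 ->
  nu_w w l = f w ((1 - Re l)/2) /\ 0 <= (1 - Re l)/2 <= 1.
Proof. destruct l as [x y]. unfold Cmod. simpl. intros H.
  assert (H2 : x*x + y*y = 1).
  { assert (0 <= x*(x*1)+y*(y*1)) as H0 by nra.
    pose proof (sqrt_sqrt _ H0) as E. rewrite H in E. nra. }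
  split. unfold nu_w, f. rewrite re_eq by exact H2. f_equal. f_equal. f_equal. field.
  simpl. nra. Qed.

Lemma l_exists s : 0 <= s <= 1 -> exists l : C, Cmod l = 1 /\ Re l = 1 - 2*s.
Proof. intros Hs. exists (1-2*s, sqrt (1 - (1-2*s)*(1-2*s))). split; [|reflexivity].
  unfold Cmod; simpl. rewrite !Rmult_1_r. rewrite sqrt_sqrt by nra.
  replace ((1 - 2 * s) * (1 - 2 * s) + (1 - (1 - 2 * s) * (1 - 2 * s))) with 1 by ring.
  apply sqrt_1. Qed.

Lemma n_f w : n_w w = f w 1.
Proof. unfold n_w, f. rewrite Rmult_1_r. ring. Qed.

Lemma fold1 x e m a : Rabs x <= 1/2 -> is_sign e -> a = e*x + IZR m -> 0 <= a <= 1/2 -> a = Rabs x.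
Proof. intros Hx He Ha Hb. unfold Rabs in *. destruct (Rcase_abs x);
  destruct He; subst e;
  (assert (-1 < IZR m) by lra; assert (IZR m < 2) by lra;
   apply lt_IZR in H; apply lt_IZR in H0;
   assert (m = 0 \/ m = 1)%Z as [-> | ->] by lia; simpl in *; lra). Qed.

Lemma central x y z : Rabs x <= 1/2 -> Rabs y <= 1/2 -> Rabs z <= 1/2 -> InT x y z ->
  Rabs x + Rabs y + Rabs z <= 1 /\ Rabs x <= Rabs y + Rabs z /\
  Rabs y <= Rabs x + Rabs z /\ Rabs z <= Rabs x + Rabs y.
Proof. intros Hx Hy Hz (e1&e2&e3&m1&m2&m3&s1&s2&s3&h1&h2&h3&h4).
  rewrite <- (fold1 x e1 m1 (e1*x + IZR m1)) by (auto; lra).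
  rewrite <- (fold1 y e2 m2 (e2*y + IZR m2)) by (auto; lra).
  rewrite <- (fold1 z e3 m3 (e3*z + IZR m3)) by (auto; lra).
  lra. Qed.

Lemma sign_ex x : exists e, is_sign e /\ e*x + IZR 0 = Rabs x.
Proof. unfold Rabs. destruct (Rcase_abs x).
  exists (-1). split. right; reflexivity. simpl; ring.
  exists 1. split. left; reflexivity. simpl; ring. Qed.

Lemma central_rev x y z :
  Rabs x + Rabs y + Rabs z <= 1 -> Rabs x <= Rabs y + Rabs z ->
  Rabs y <= Rabs x + Rabs z -> Rabs z <= Rabs x + Rabs y -> InT x y z.
Proof. intros. destruct (sign_ex x) as (e1&?&E1). destruct (sign_ex y) as (e2&?&E2).
  destruct (sign_ex z) as (e3&?&E3).
  exists e1, e2, e3, 0%Z, 0%Z, 0%Z. repeat split; auto; rewrite E1, E2, E3; lra. Qed.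

Lemma ws_lt1 w s : w < 1 -> 0 <= s <= 1 -> w*s < 1.
Proof. intros. destruct (Rle_or_lt 0 w). assert (w*s <= w*1) by (apply Rmult_le_compat_l; lra). lra.
  assert (w*s <= 0) by nra. lra. Qed.

Lemma g_le w s : w < 1 -> 0 <= s <= 1 -> g w s <= s * Rabs w / 2.
Proof. intros. rewrite g_kk by (try apply Rlt_le, ws_lt1; lra).
  pose proof (kk_le_half (w*s)). pose proof (Rabs_pos w).
  assert (0 <= s * Rabs w) by nra. nra. Qed.

Lemma small_tri a b c : a < 1 -> b < 1 -> c < 1 ->
  (forall s, 0 < s <= 1 -> s * Rabs a <= 1 -> s * Rabs b <= 1 -> s * Rabs c <= 1 ->
     g a s <= g b s + g c s) -> Rabs a <= Rabs b + Rabs c.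
Proof. intros Ha Hb Hc H.
  destruct (Rle_or_lt (Rabs a) (Rabs b + Rabs c)) as [|Hd]; auto. exfalso.
  pose proof (Rabs_pos a). pose proof (Rabs_pos b). pose proof (Rabs_pos c).
  assert (Ea : Rabs a * Rabs a = a*a) by (rewrite <- Rabs_mult; apply Rabs_pos_eq; nra).
  assert (Eb : Rabs b * Rabs b = b*b) by (rewrite <- Rabs_mult; apply Rabs_pos_eq; nra).
  assert (Ec : Rabs c * Rabs c = c*c) by (rewrite <- Rabs_mult; apply Rabs_pos_eq; nra).
  set (d := Rabs a - Rabs b - Rabs c) in *.
  assert (Hd0 : 0 < d) by (unfold d; lra).
  set (A := 1 + a*a + b*b + c*c + Rabs a + Rabs b + Rabs c).
  assert (HA : 1 <= A) by (unfold A; nra).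
  set (s := d / (2*A)).
  assert (Hs : s * (2*A) = d) by (unfold s; field; lra).
  assert (Hs0 : 0 < s) by (unfold s; apply Rdiv_lt_0_compat; lra).
  assert (Hda : d <= Rabs a) by (unfold d; lra).
  assert (Hsa : s * Rabs a <= 1/2).
  { assert (s*Rabs a * (2*A) <= A) by (unfold A in *; nra). nra. }
  assert (Hsb : s * Rabs b <= 1/2).
  { assert (s*Rabs b * (2*A) <= A) by (unfold A in *; nra). nra. }
  assert (Hsc : s * Rabs c <= 1/2).
  { assert (s*Rabs c * (2*A) <= A) by (unfold A in *; nra). nra. }
  assert (Hs1 : s <= 1).
  { assert (s * (2*A) <= A) by (rewrite Hs; unfold A; nra).
    destruct (Rle_or_lt s 1); auto. nra. }
  specialize (H s ltac:(lra) ltac:(lra) ltac:(lra) ltac:(lra)).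
  rewrite !g_kk in H by (try apply Rlt_le, ws_lt1; lra).
  pose proof (kk_small (a*s) ltac:(apply Rlt_le, ws_lt1; lra)) as Ka.
  pose proof (kk_small (b*s) ltac:(apply Rlt_le, ws_lt1; lra)) as Kb.
  pose proof (kk_small (c*s) ltac:(apply Rlt_le, ws_lt1; lra)) as Kc.
  rewrite !Rabs_mult, (Rabs_pos_eq s) in Ka, Kb, Kc by lra.
  assert (H' : Rabs a * kk (a*s) <= Rabs b * kk (b*s) + Rabs c * kk (c*s)).
  { apply (Rmult_le_reg_l s); nra. }
  assert (Rabs a * (1/4 - Rabs a * s/4) <= Rabs a * kk (a*s)) by (apply Rmult_le_compat_l; lra).
  assert (Rabs b * kk (b*s) <= Rabs b * (1/4 + Rabs b * s/4)) by (apply Rmult_le_compat_l; lra).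
  assert (Rabs c * kk (c*s) <= Rabs c * (1/4 + Rabs c * s/4)) by (apply Rmult_le_compat_l; lra).
  assert (d <= s * (a*a+b*b+c*c)) by (unfold d; nra).
  assert (s * (a*a+b*b+c*c) <= s * A) by (apply Rmult_le_compat_l; unfold A; lra).
  nra. Qed.

Lemma kk_m3 : kk (-3) = 1/6.
Proof. unfold kk. replace (1 - -3) with (2*2) by ring. rewrite sqrt_square by lra. field. Qed.

Lemma no_big a b c : a <= b -> a <= c -> b < 1 -> c < 1 -> b <> 0 -> c <> 0 ->
  Rabs a <= Rabs b + Rabs c ->
  (forall s, 0 <= s <= 1 -> g a s <= 1/2 -> g b s <= 1/2 -> g c s <= 1/2 ->
     g a s + g b s + g c s <= 1) -> -3 < a.
Proof. intros Hab Hac Hb Hc Hb0 Hc0 Ht H.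
  destruct (Rle_or_lt a (-3)) as [Ha|]; auto. exfalso.
  set (s := -3 / a).
  assert (Has : a * s = -3) by (unfold s; field; lra).
  assert (Hs0 : 0 < s) by (destruct (Rle_or_lt s 0); [nra|lra]).
  assert (Hs1 : s <= 1).
  { destruct (Rle_or_lt s 1); auto. nra. }
  assert (Hbs : -3 <= b*s) by nra. assert (Hcs : -3 <= c*s) by nra.
  assert (Hbs1 : b*s < 1) by (apply ws_lt1; lra).
  assert (Hcs1 : c*s < 1) by (apply ws_lt1; lra).
  assert (Ga : g a s = 1/2).
  { unfold g, f. rewrite Has. replace (1 - -3) with (2*2) by ring. rewrite sqrt_square by lra.
    rewrite Rabs_left; lra. }
  specialize (H s ltac:(lra) ltac:(lra)
    ltac:(rewrite g_G; apply G_le_half; lra) ltac:(rewrite g_G; apply G_le_half; lra)).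
  rewrite Ga in H.
  assert (Hgb : g b s = s * Rabs b * kk (b*s)) by (apply g_kk; lra).
  assert (Hgc : g c s = s * Rabs c * kk (c*s)) by (apply g_kk; lra).
  assert (Hsa : s * Rabs a = 3) by (rewrite Rabs_left by lra; lra).
  pose proof (Rabs_pos b). pose proof (Rabs_pos c).
  assert (0 < Rabs b) by (apply Rabs_pos_lt; auto).
  assert (0 < Rabs c) by (apply Rabs_pos_lt; auto).
  pose proof (kk_pos (b*s)). pose proof (kk_pos (c*s)).
  assert (0 < g c s) by (rewrite Hgc; apply Rmult_lt_0_compat; [apply Rmult_lt_0_compat|]; lra).
  assert (0 < g b s) by (rewrite Hgb; apply Rmult_lt_0_compat; [apply Rmult_lt_0_compat|]; lra).
  destruct Hab as [Hab|Hab]; [|subst b; lra].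
  destruct Hac as [Hac|Hac]; [|subst c; lra].
  assert (Kb : 1/6 < kk (b*s)) by (rewrite <- kk_m3; apply kk_smono; nra).
  assert (Kc : 1/6 < kk (c*s)) by (rewrite <- kk_m3; apply kk_smono; nra).
  assert (s * Rabs b * (1/6) < g b s) by (rewrite Hgb; apply Rmult_lt_compat_l; nra).
  assert (s * Rabs c * (1/6) < g c s) by (rewrite Hgc; apply Rmult_lt_compat_l; nra).
  assert (s * Rabs a <= s * Rabs b + s * Rabs c) by nra.
  lra. Qed.

Lemma tri a b c s : a < 1 -> b < 1 -> c < 1 -> 0 <= s <= 1 ->
  Rabs a <= Rabs b + Rabs c -> g a 1 <= g b 1 + g c 1 -> g a s <= g b s + g c s.
Proof. intros Ha Hb Hc Hs Hw Hn.
  assert (gpos : forall w t, 0 <= g w t) by (intros; apply Rabs_pos).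
  pose proof (ws_lt1 a s Ha Hs). pose proof (ws_lt1 b s Hb Hs). pose proof (ws_lt1 c s Hc Hs).
  pose proof (Rabs_pos a). pose proof (Rabs_pos b). pose proof (Rabs_pos c).
  destruct (Rle_or_lt a b) as [Hab|Hab]; destruct (Rle_or_lt a c) as [Hac|Hac].
  - rewrite !g_kk by lra.
    assert (kk (a*s) <= kk (b*s)) by (apply kk_mono; nra).
    assert (kk (a*s) <= kk (c*s)) by (apply kk_mono; nra).
    pose proof (kk_pos (a*s)).
    assert (Rabs a * kk (a*s) <= Rabs b * kk (b*s) + Rabs c * kk (c*s)).
    { assert (Rabs b * kk (a*s) <= Rabs b * kk (b*s)) by (apply Rmult_le_compat_l; lra).
      assert (Rabs c * kk (a*s) <= Rabs c * kk (c*s)) by (apply Rmult_le_compat_l; lra).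
      nra. }
    assert (s * (Rabs a * kk (a*s)) <= s * (Rabs b * kk (b*s) + Rabs c * kk (c*s)))
      by (apply Rmult_le_compat_l; lra).
    nra.
  -
    destruct (Rle_or_lt 0 a).
    + assert (g a s <= g b s) by (rewrite !g_G; apply G_mono_pos; nra).
      specialize (gpos c s). lra.
    + assert (g a s <= g c s) by (rewrite !g_G; apply G_mono_neg; nra).
      specialize (gpos b s). lra.
  - destruct (Rle_or_lt 0 a).
    + assert (g a s <= g c s) by (rewrite !g_G; apply G_mono_pos; nra).
      specialize (gpos b s). lra.
    + assert (g a s <= g b s) by (rewrite !g_G; apply G_mono_neg; nra).
      specialize (gpos c s). lra.
  -
    pose proof (ratio a b s (Rlt_le _ _ Hab) Ha Hs) as R1.
    pose proof (ratio a c s (Rlt_le _ _ Hac) Ha Hs) as R2.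
    rewrite !g_kk in Hn by lra. rewrite !Rmult_1_l, !Rmult_1_r in Hn.
    rewrite !g_kk by lra.
    pose proof (kk_pos a). pose proof (kk_pos b). pose proof (kk_pos c).
    pose proof (kk_pos (a*s)). pose proof (kk_pos (b*s)). pose proof (kk_pos (c*s)).
    set (X := kk (a*s)) in *. set (Ka := kk a) in *.
    assert (E1 : X * (Rabs a * Ka) <= X * (Rabs b * kk b + Rabs c * kk c))
      by (apply Rmult_le_compat_l; lra).
    assert (E2 : Rabs b * (X * kk b) <= Rabs b * (kk (b*s) * Ka)) by (apply Rmult_le_compat_l; lra).
    assert (E3 : Rabs c * (X * kk c) <= Rabs c * (kk (c*s) * Ka)) by (apply Rmult_le_compat_l; lra).
    assert (E4 : Ka * (Rabs a * X) <= Ka * (Rabs b * kk (b*s) + Rabs c * kk (c*s))) by nra.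
    assert (E5 : Rabs a * X <= Rabs b * kk (b*s) + Rabs c * kk (c*s))
      by (apply (Rmult_le_reg_l Ka); lra).
    assert (s * (Rabs a * X) <= s * (Rabs b * kk (b*s) + Rabs c * kk (c*s)))
      by (apply Rmult_le_compat_l; lra).
    nra.
Qed.

Lemma g_mono_s w s : w < 1 -> 0 <= s <= 1 -> g w s <= g w 1.
Proof. intros. rewrite !g_G. destruct (Rle_or_lt 0 w).
  apply G_mono_pos; nra. apply G_mono_neg; nra. Qed.

Theorem mainTheorem6 (w1 w2 w3 : R) :
  w1 < 1 -> w1 <> 0 -> w2 < 1 -> w2 <> 0 -> w3 < 1 -> w3 <> 0 ->
  ((forall l : C, Cmod l = 1 -> InT (nu_w w1 l) (nu_w w2 l) (nu_w w3 l)) <->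
   (Rabs (n_w w1) + Rabs (n_w w2) + Rabs (n_w w3) <= 1 /\
    Rabs (n_w w1) <= Rabs (n_w w2) + Rabs (n_w w3) /\
    Rabs (n_w w2) <= Rabs (n_w w1) + Rabs (n_w w3) /\
    Rabs (n_w w3) <= Rabs (n_w w1) + Rabs (n_w w2) /\
    Rabs w1 <= Rabs w2 + Rabs w3 /\
    Rabs w2 <= Rabs w1 + Rabs w3 /\
    Rabs w3 <= Rabs w1 + Rabs w2)).
Proof.
  intros H1 H1' H2 H2' H3 H3'.
  rewrite !n_f. change (Rabs (f w1 1)) with (g w1 1).
  change (Rabs (f w2 1)) with (g w2 1). change (Rabs (f w3 1)) with (g w3 1).
  split.
  - intros HL.
    assert (HS : forall s, 0 <= s <= 1 -> InT (f w1 s) (f w2 s) (f w3 s)).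
    { intros s Hs. destruct (l_exists s Hs) as (l & Hl & Hre). pose proof (HL l Hl) as H.
      destruct (nu_f w1 l Hl) as [E1 _]. destruct (nu_f w2 l Hl) as [E2 _].
      destruct (nu_f w3 l Hl) as [E3 _].
      rewrite Hre in E1, E2, E3.
      replace ((1 - (1 - 2*s))/2) with s in E1, E2, E3 by field.
      rewrite E1, E2, E3 in H. exact H. }
    assert (HC : forall s, 0 <= s <= 1 -> g w1 s <= 1/2 -> g w2 s <= 1/2 -> g w3 s <= 1/2 ->
      g w1 s + g w2 s + g w3 s <= 1 /\ g w1 s <= g w2 s + g w3 s /\
      g w2 s <= g w1 s + g w3 s /\ g w3 s <= g w1 s + g w2 s).
    { intros. unfold g in *. apply central; auto. }
    assert (HC' : forall s, 0 < s <= 1 -> s * Rabs w1 <= 1 -> s * Rabs w2 <= 1 -> s * Rabs w3 <= 1 ->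
      g w1 s + g w2 s + g w3 s <= 1 /\ g w1 s <= g w2 s + g w3 s /\
      g w2 s <= g w1 s + g w3 s /\ g w3 s <= g w1 s + g w2 s).
    { intros s Hs Ha Hb Hc. apply HC; try lra.
      - eapply Rle_trans; [apply g_le; lra | lra].
      - eapply Rle_trans; [apply g_le; lra | lra].
      - eapply Rle_trans; [apply g_le; lra | lra]. }
    assert (T1 : Rabs w1 <= Rabs w2 + Rabs w3).
    { apply small_tri; auto. intros s ? ? ? ?. destruct (HC' s) as (?&?&?&?); auto. }
    assert (T2 : Rabs w2 <= Rabs w1 + Rabs w3).
    { apply small_tri; auto. intros s ? ? ? ?. destruct (HC' s) as (?&?&?&?); auto. }
    assert (T3 : Rabs w3 <= Rabs w1 + Rabs w2).
    { apply small_tri; auto. intros s ? ? ? ?. destruct (HC' s) as (?&?&?&?); auto. }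
    assert (A1 : w1 <= w2 -> w1 <= w3 -> -3 < w1).
    { intros. apply (no_big w1 w2 w3); auto. intros. destruct (HC s) as (?&?&?&?); auto. }
    assert (A2 : w2 <= w1 -> w2 <= w3 -> -3 < w2).
    { intros. apply (no_big w2 w1 w3); auto; intros; destruct (HC s) as (?&?&?&?); auto; lra. }
    assert (A3 : w3 <= w1 -> w3 <= w2 -> -3 < w3).
    { intros. apply (no_big w3 w1 w2); auto; intros; destruct (HC s) as (?&?&?&?); auto; lra. }
    assert (B : -3 < w1 /\ -3 < w2 /\ -3 < w3).
    { destruct (Rle_or_lt w1 w2), (Rle_or_lt w1 w3), (Rle_or_lt w2 w3);
      first [ assert (-3 < w1) by (apply A1; lra)
            | assert (-3 < w2) by (apply A2; lra)
            | assert (-3 < w3) by (apply A3; lra) ]; repeat split; lra. }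
    destruct (HC 1) as (?&?&?&?); try lra;
      try (rewrite g_G; apply G_le_half; lra).
    repeat split; auto.
  - intros (A1&A2&A3&A4&A5&A6&A7) l Hl.
    destruct (nu_f w1 l Hl) as [E1 Hs]. destruct (nu_f w2 l Hl) as [E2 _].
    destruct (nu_f w3 l Hl) as [E3 _].
    rewrite E1, E2, E3. set (s := (1 - Re l)/2) in *.
    pose proof (g_mono_s w1 s H1 Hs). pose proof (g_mono_s w2 s H2 Hs).
    pose proof (g_mono_s w3 s H3 Hs).
    pose proof (tri w1 w2 w3 s H1 H2 H3 Hs A5 A2).
    pose proof (tri w2 w1 w3 s H2 H1 H3 Hs A6 A3).
    pose proof (tri w3 w1 w2 s H3 H1 H2 Hs A7 A4).
    unfold g in *.
    apply central_rev; lra.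
Qed.
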